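(* Let $n\ge 2$ and let $\Gamma=(\gamma_{i,j})\in\mathcal{M}_n(\mathbb{R})$ be symmetric with entries in $[0,1]$, zero diagonal, and at least one strictly positive off-diagonal entry in each row, such that the weighted graph with weight matrix $\Gamma$ is connected. Let $\boldsymbol{\eta}=\Gamma\mathbf{1}_n$, $L=\operatorname{diag}(\boldsymbol{\eta})-\Gamma$, and \[ E\coloneqq L_{2:n,2:n}+\Gamma_{2:n,1}\,\mathbf{1}_{n-1}^\top\in\mathcal{M}_{n-1}(\mathbb{R}). \] Then every eigenvalue of $E$ is at least $\min\Gamma_{2:n,1}=\min_{2\le i\le n}\gamma_{i,1}$.
   Context: $\mathbf{1}_m$ is the all-ones vector of length $m$. $L_{2:n,2:n}$ is the submatrix of $L$ formed by rows and columns $2,\dots,n$; $\Gamma_{2:n,1}$ is the column vector $(\gamma_{2,1},\dots,\gamma_{n,1})^\top$. *)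

(* Defs.v *)
From HB Require Import structures.
From mathcomp Require Import all_boot all_order all_algebra.
From mathcomp Require Import reals.
From mathcomp Require Import complex.
Set Implicit Arguments. Unset Strict Implicit. Unset Printing Implicit Defensive.
Import Order.TTheory GRing.Theory Num.Theory.
Local Open Scope ring_scope.

(* Conventions: the paper's dimension n is written here as n.+2 (so n >= 2
   is automatic); index 1 of the paper is ord0, index i+1 >= 2 is lift ord0 i. *)

Section Defs.
Variable R : realType.
Variable n : nat.
Implicit Type G : 'M[R]_(n.+2).

Definition eta_vec G : 'cV[R]_(n.+2) := G *m const_mx 1.

Definition lapl G : 'M[R]_(n.+2) := diag_mx (eta_vec G)^T - G.

Definition Emat G : 'M[R]_(n.+1) :=
  \matrix_(i, j) (lapl G (lift ord0 i) (lift ord0 j) + G (lift ord0 i) ord0).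

Definition gmin G : R :=
  \big[Num.min/G (lift ord0 ord0) ord0]_(i < n.+1) G (lift ord0 i) ord0.

Definition wconnected G : Prop :=
  forall i j : 'I_(n.+2), connect [rel a b | 0 < G a b] i j.
End Defs.

(* Main.v *)
Require Import Defs.
From HB Require Import structures.
From mathcomp Require Import all_boot all_order all_algebra.
From mathcomp Require Import reals.
From mathcomp Require Import complex.
From mathcomp Require Import ring.
Import Order.TTheory GRing.Theory Num.Theory.
Local Open Scope ring_scope.

Lemma pairw (C : numClosedFieldType) N (a : 'I_N -> 'I_N -> C) (y : 'I_N -> C)
  (asym : forall i j, a i j = a j i) :
  \sum_i \sum_j a i j * ((y i - y j) * (y i - y j)^*) =
  2%:R * (\sum_i (\sum_j a i j) * (y i * (y i)^*)
          - \sum_i \sum_j a i j * (y i * (y j)^*)).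
Proof.
have E : forall i j, a i j * ((y i - y j) * (y i - y j)^*) =
   a i j * (y i * (y i)^*) + a j i * (y j * (y j)^*)
   - a i j * (y i * (y j)^*) - a j i * (y j * (y i)^*).
  by move=> i j; rewrite (asym j i) rmorphB /=; ring.
under eq_bigr do under eq_bigr do rewrite E.
under eq_bigr do rewrite !sumrB big_split /=.
rewrite !sumrB big_split /=.
rewrite [X in _ + X - _ - _]exchange_big [X in _ - X]exchange_big /=.
under [X in _ = 2%:R * (X - _)]eq_bigr do rewrite mulr_suml.
ring.
Qed.

Lemma bigmin_le (R : realType) (I : eqType) (r : seq I) (F : I -> R) x0 j :
  j \in r -> \big[Num.min/x0]_(i <- r) F i <= F j.
Proof.
elim: r => // a r IH; rewrite inE big_cons => /orP[/eqP->|/IH h].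
  by rewrite ge_min lexx.
by rewrite ge_min h orbT.
Qed.

Theorem lemma4p5 (R : realType) (n : nat) (G : 'M[R]_(n.+2))
  (Gsym : G^T = G)
  (G01 : forall i j, 0 <= G i j <= 1)
  (Gdiag : forall i, G i i = 0)
  (Grow : forall i, exists j, j != i /\ 0 < G i j)
  (Gconn : wconnected G) :
  forall lam : R[i],
    eigenvalue (map_mx (fun x : R => (x%:C)%C) (Emat G)) lam ->
    ((gmin G)%:C)%C <= lam.
Proof.
move=> lam /eigenvalueP [v hv v0].
have Gs a b : G a b = G b a by rewrite -{1}Gsym mxE.
have G0 a b : 0 <= G a b by case/andP: (G01 a b).
set m := gmin G.
have m0 : 0 <= m.
  rewrite /m /gmin; elim/big_ind: _ => //.
  by move=> a b ha hb; rewrite le_min ha hb.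
have mle : forall i, m <= G (lift ord0 i) ord0.
  by move=> i; apply: bigmin_le; rewrite mem_index_enum.
pose f := fun r : R => (r%:C)%C.
pose N := n.+2.
pose x : 'I_N -> R[i] := fun k => if unlift ord0 k is Some i then v 0 i else 0.
have x0 : x ord0 = 0 by rewrite /x unlift_none.
have xl : forall i, x (lift ord0 i) = v 0 i by move=> i; rewrite /x liftK.
have LcE : forall a b, lapl G a b = (if a == b then \sum_k G a k else 0) - G a b.
  move=> a b; rewrite !mxE /eta_vec; case: eqP => [->|_] //=.
  by rewrite mulr1n; congr (_ - _); apply: eq_bigr => k _; rewrite mxE mulr1.
pose y j := \sum_i x i * f (lapl G i j).
have y0E : y ord0 = - \sum_i v 0 i * f (G (lift ord0 i) ord0).
  rewrite /y big_ord_recl x0 mul0r add0r -sumrN; apply: eq_bigr => i _.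
  rewrite xl LcE eq_sym (negbTE (neq_lift _ _)) sub0r /f rmorphN /= mulrN //.
have hy : forall j, y j = lam * x j + y ord0.
  move=> j; case: (unliftP ord0 j) => [j'|] ->; last by rewrite x0 mulr0 add0r.
  have := congr1 (fun M : 'M[R[i]]_(1, n.+1) => M 0 j') hv; rewrite !mxE.
  under eq_bigr do rewrite !mxE /f rmorphD mulrDr.
  rewrite big_split /= => h.
  rewrite y0E xl -h addrK /y big_ord_recl x0 mul0r add0r.
  by apply: eq_bigr => i _; rewrite xl /f /lapl /eta_vec !mxE.
have fm0 : 0 <= f m by rewrite /f lecR.
have cj0 : forall z : R[i], 0 <= z * z^* by move=> z; apply: mul_conjC_ge0.
pose S := \sum_j x j * (x j)^*.
pose s := \sum_j x j.
pose Q := \sum_j y j * (x j)^*.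
have sumy : \sum_j y j = 0.
  rewrite /y exchange_big /=; apply: big1 => i _; rewrite -mulr_sumr.
  suff -> : \sum_j f (lapl G i j) = 0 by rewrite mulr0.
  rewrite /f -rmorph_sum /=.
  under eq_bigr do rewrite LcE.
  rewrite sumrB (bigD1 i) //= eqxx [X in _ + X - _]big1 ?addr0 ?subrr //.
  by move=> j; rewrite eq_sym => /negbTE ->.
have cE : lam * s + N%:R * y ord0 = 0.
  rewrite -sumy; under [RHS]eq_bigr do rewrite hy.
  by rewrite big_split /= -mulr_sumr sumr_const card_ord mulr_natl.
have QE : Q = lam * S + y ord0 * s^*.
  rewrite /Q; under eq_bigr do rewrite hy mulrDl -mulrA.
  by rewrite big_split /= -!mulr_sumr rmorph_sum.
have NQ : N%:R * Q = lam * (N%:R * S - s * s^*).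
  have Nc : N%:R * y ord0 = - (lam * s) by apply/eqP; rewrite -addr_eq0 addrC cE.
  rewrite QE; transitivity (N%:R * (lam * S) + (N%:R * y ord0) * s^*); first by ring.
  rewrite Nc; ring.
have [k vk] : exists k, v 0 k != 0.
  case: (pickP (fun k => v 0 k != 0)) => [k vk|H]; first by exists k.
  case/eqP: v0; apply/rowP => k; move/negbT: (H k); rewrite negbK => /eqP ->.
  by rewrite mxE.
have Spos : 0 < S.
  rewrite /S (bigD1 (lift ord0 k)) //= xl; apply: ltr_wpDr.
    by apply: sumr_ge0 => j _.
  by rewrite mul_conjC_gt0.
have Ppos : 0 < N%:R * S - s * s^*.
  have := @pairw _ _ (fun _ _ => (1 : R[i])) x (fun _ _ => erefl).
  rewrite sumr_const card_ord.
  have -> : \sum_i \sum_j 1 * (x i * (x j)^*) = s * s^*.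
    rewrite /s mulr_suml; apply: eq_bigr => i _.
    by rewrite rmorph_sum mulr_sumr; apply: eq_bigr => j _; rewrite mul1r.
  have -> : \sum_i 1 *+ N * (x i * (x i)^*) = N%:R * S.
    by rewrite /S mulr_sumr.
  move=> h.
  have : 0 < 2%:R * (N%:R * S - s * s^*).
    rewrite -h big_ord_recl; apply: ltr_wpDr.
      by apply: sumr_ge0 => i _; apply: sumr_ge0 => j _; rewrite mul1r.
    apply: (lt_le_trans Spos); rewrite /S; apply: ler_sum => j _.
    by rewrite x0 sub0r rmorphN mulrNN mul1r.
  by rewrite pmulr_rgt0 // ltr0n.
have QS : f m * S <= Q.
  pose F i j := f (G i j) * ((x i - x j) * (x i - x j)^*).
  have := @pairw _ _ (fun i j => f (G i j)) x (fun i j => congr1 f (Gs i j)).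
  have QE2 : Q = \sum_i ((\sum_j f (G i j)) * (x i * (x i)^*)
      - \sum_j f (G i j) * (x i * (x j)^*)).
    rewrite /Q /y; under eq_bigr do rewrite mulr_suml.
    rewrite exchange_big /=; apply: eq_bigr => i _.
    under eq_bigr do rewrite LcE /f rmorphB /= mulrBr mulrBl.
    rewrite sumrB (bigD1 i) //= eqxx [X in _ + X - _]big1 ?addr0; last first.
      by move=> j; rewrite eq_sym => /negbTE ->; rewrite rmorph0 mulr0 mul0r.
    rewrite rmorph_sum /=; congr (_ - _); first by ring.
    by apply: eq_bigr => j _; ring.
  rewrite -sumrB -QE2 => h.
  have S' : S = \sum_i v 0 i * (v 0 i)^*.
    by rewrite /S big_ord_recl x0 mul0r add0r; apply: eq_bigr => i _; rewrite xl.
  have : 2%:R * (f m * S) <= 2%:R * Q.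
    rewrite -h big_ord_recl [X in _ <= _ + X](eq_bigr (fun i => F (lift ord0 i) ord0
        + \sum_j F (lift ord0 i) (lift ord0 j))); last by move=> i _; rewrite big_ord_recl.
    rewrite [X in _ <= X + _]big_ord_recl big_split /= /F x0 subrr mul0r mulr0 add0r.
    rewrite mulr_natl mulr2n; apply: lerD.
      rewrite S' mulr_sumr; apply: ler_sum => j _.
      rewrite xl sub0r rmorphN mulrNN Gs; apply: ler_wpM2r => //.
      by rewrite /f lecR.
    rewrite -[X in X <= _]addr0; apply: lerD; last first.
      by apply: sumr_ge0 => i _; apply: sumr_ge0 => j _; rewrite /F mulr_ge0 // /f ler0c.
    rewrite S' mulr_sumr; apply: ler_sum => j _.
    rewrite xl subr0; apply: ler_wpM2r => //.
    by rewrite /f lecR.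
  by rewrite ler_pM2l // ltr0n.
rewrite -(ler_pM2r Ppos) -NQ.
apply: (le_trans (y := f m * (N%:R * S))).
  by apply: ler_wpM2l => //; rewrite gerBl.
by rewrite mulrCA; apply: ler_wpM2l => //; rewrite ler0n.
Qed.
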